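(* Let $\alpha>0$, $\nu:=\nu(\alpha)$, and let $(a_n)_{n\ge1}$ be a positive sequence with $\lim_{n\to\infty}a_ne^{-\nu n}=0$. Let $(\chi_t)_{t\ge1}$ be defined by $\chi_t:=\max\{a_t,\frac{t-1}{\alpha}\chi_1,\dots,\frac1\alpha\chi_{t-1}\}$. For $t\ge1$ and integers $i$, set $\tilde\chi_i(t):=-\infty$ if $i<0$, $\tilde\chi_0(t):=a_t$, and $\tilde\chi_i(t):=(t-i)\chi_i/\alpha$ for $1\le i\le t-1$, and define $$I_t:=\max\{i<t:\ \chi_t=\tilde\chi_i(t)\}.$$ Then $\sup_{t\ge1}(t-I_t)<\infty$.
   Context: For $\alpha>0$, let $T=T(\alpha)\in\mathbb N$ be the unique positive integer with $\frac{(T-1)^T}{T^{T-1}}<\alpha\le\frac{T^{T+1}}{(T+1)^T}$, and define $\nu(\alpha):=\frac1T\log\frac T\alpha$. *)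

(* Defs.v *)
From Stdlib Require Import Reals Lra Lia List.
Import ListNotations.
Open Scope R_scope.

Definition T_spec (alpha : R) (T : nat) : Prop :=
  (1 <= T)%nat /\
  (INR T - 1) ^ T / INR T ^ (T - 1) < alpha /\
  alpha <= INR T ^ (T + 1) / (INR T + 1) ^ T.

Definition nu_of (alpha : R) (T : nat) : R := / INR T * ln (INR T / alpha).

(* chis a alpha n = [chi_1; ...; chi_n], where
   chi_t = max { a_t, (t-1)/alpha chi_1, ..., 1/alpha chi_{t-1} }. *)
Fixpoint chis (a : nat -> R) (alpha : R) (n : nat) : list R :=
  match n with
  | O => []
  | S m =>
      let l := chis a alpha m in
      l ++ [fold_left Rmax
              (map (fun i => INR (S m - i) / alpha * nth (i - 1) l 0) (seq 1 m))
              (a (S m))]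
  end.

Definition chi (a : nat -> R) (alpha : R) (t : nat) : R :=
  nth (t - 1) (chis a alpha t) 0.

(* tilde chi_i(t) for 0 <= i (the case i < 0 is -infinity, which never
   equals the real number chi_t and is therefore irrelevant for I_t). *)
Definition chitilde (a : nat -> R) (alpha : R) (i t : nat) : R :=
  match i with
  | O => a t
  | _ => INR (t - i) / alpha * chi a alpha i
  end.

(* largest i < n with P i (default 0 if none) *)
Fixpoint maxidx (P : nat -> bool) (n : nat) : nat :=
  match n with
  | O => O
  | S m => if P m then m else maxidx P m
  end.

Definition I_t (a : nat -> R) (alpha : R) (t : nat) : nat :=
  maxidx (fun i => if Req_EM_T (chi a alpha t) (chitilde a alpha i t)
                   then true else false) t.

(* Main.v *)
Require Import Defs.
From Stdlib Require Import Reals.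
From Stdlib Require Import Lra Lia List Arith.
Open Scope R_scope.

Lemma chis_len a al n : length (chis a al n) = n.
Proof. induction n; simpl; auto. rewrite length_app, IHn; simpl; lia. Qed.

Lemma chis_prefix a al n k i : (i < n)%nat ->
  nth i (chis a al (n + k)) 0 = nth i (chis a al n) 0.
Proof.
  intros Hi. induction k.
  - rewrite Nat.add_0_r; auto.
  - rewrite Nat.add_succ_r. simpl. rewrite app_nth1; auto.
    rewrite chis_len; lia.
Qed.

Lemma chi_eq a al t : (1 <= t)%nat ->
  chi a al t = fold_left Rmax (map (fun i => INR (t-i)/al * chi a al i) (seq 1 (t-1))) (a t).
Proof.
  intros Ht. destruct t as [|m]; [lia|].
  unfold chi at 1. replace (S m - 1)%nat with m by lia. simpl chis.
  rewrite app_nth2; rewrite chis_len; [|lia]. rewrite Nat.sub_diag. simpl nth.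
  f_equal. apply map_ext_in. intros i Hi. apply in_seq in Hi.
  f_equal. unfold chi.
  replace m with (i + (m - i))%nat at 1 by lia.
  apply chis_prefix. lia.
Qed.

Lemma fold_ge_init l x : x <= fold_left Rmax l x.
Proof.
  revert x; induction l; intros x; simpl; [lra|].
  eapply Rle_trans; [apply Rmax_l|apply IHl].
Qed.

Lemma fold_ge_mem l x y : In y l -> y <= fold_left Rmax l x.
Proof.
  revert x; induction l; intros x H; simpl in *; [tauto|].
  destruct H as [<-|H].
  - eapply Rle_trans; [apply Rmax_r|apply fold_ge_init].
  - apply IHl; auto.
Qed.

Lemma fold_att l x : fold_left Rmax l x = x \/ In (fold_left Rmax l x) l.
Proof.
  revert x; induction l; intros x; simpl; auto.
  destruct (IHl (Rmax x a)) as [H|H].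
  - rewrite H. apply Rmax_case; auto.
  - auto.
Qed.

Lemma chi_ge_a a al t : (1 <= t)%nat -> a t <= chi a al t.
Proof. intros; rewrite chi_eq; auto; apply fold_ge_init. Qed.

Lemma chi_ge a al t i : (1 <= i)%nat -> (i < t)%nat ->
  INR (t - i) / al * chi a al i <= chi a al t.
Proof.
  intros H1 H2. rewrite (chi_eq a al t) by lia. apply fold_ge_mem.
  apply in_map_iff. exists i. split; auto. apply in_seq. lia.
Qed.

Lemma chi_att a al t : (1 <= t)%nat ->
  chi a al t = a t \/ exists i, (1 <= i)%nat /\ (i < t)%nat /\
     chi a al t = INR (t - i) / al * chi a al i.
Proof.
  intros Ht. rewrite (chi_eq a al t) by auto.
  destruct (fold_att (map (fun i => INR (t-i)/al * chi a al i) (seq 1 (t-1))) (a t)) as [H|H];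
    auto.
  right. apply in_map_iff in H. destruct H as [i [Hi Hin]]. apply in_seq in Hin.
  exists i. repeat split; try lia. rewrite <- Hi at 1. reflexivity.
Qed.

Lemma maxidx_ge P n i : (i < n)%nat -> P i = true -> (i <= maxidx P n)%nat.
Proof.
  induction n; intros H1 H2; simpl; [lia|].
  destruct (P n) eqn:E; [lia|].
  destruct (Nat.eq_dec i n) as [->|Hne]; [congruence|].
  apply IHn; auto; lia.
Qed.

Lemma min_range (f : nat -> R) n : (forall j, (1 <= j)%nat -> 0 < f j) ->
  exists c, 0 < c /\ forall j, (1 <= j)%nat -> (j <= n)%nat -> c <= f j.
Proof.
  intros Hf. induction n.
  - exists 1. split; [lra|]. intros; lia.
  - destruct IHn as [c [Hc H]]. exists (Rmin c (f (S n))). split.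
    + apply Rmin_case; auto. apply Hf; lia.
    + intros j H1 H2. destruct (Nat.eq_dec j (S n)) as [->|].
      * apply Rmin_r.
      * eapply Rle_trans; [apply Rmin_l|]. apply H; lia.
Qed.

Theorem lemma5 (alpha : R) (T : nat) (a : nat -> R) :
  0 < alpha ->
  T_spec alpha T ->
  (forall n : nat, (1 <= n)%nat -> 0 < a n) ->
  Un_cv (fun n : nat => a n * exp (- nu_of alpha T * INR n)) 0 ->
  exists M : nat, forall t : nat, (1 <= t)%nat -> (t - I_t a alpha t <= M)%nat.
Proof.
  intros Hal [HT _] Ha Hcv.
  set (nu := nu_of alpha T).
  assert (HTpos : 0 < INR T) by (apply lt_0_INR; lia).
  assert (HeT : exp (nu * INR T) = INR T / alpha).
  { unfold nu, nu_of. replace (/ INR T * ln (INR T / alpha) * INR T) with (ln (INR T / alpha))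
      by (field; lra). apply exp_ln. apply Rdiv_lt_0_compat; lra. }
  assert (Hpos : forall t, (1 <= t)%nat -> 0 < chi a alpha t).
  { intros t Ht. apply Rlt_le_trans with (a t); [apply Ha; auto|apply chi_ge_a; auto]. }
  destruct (min_range (fun j => chi a alpha j / exp (nu * INR j)) T) as [c [Hc Hmin]].
  { intros j Hj. apply Rdiv_lt_0_compat; [apply Hpos; auto|apply exp_pos]. }
  assert (Hgrow : forall n t, (t <= n)%nat -> (1 <= t)%nat ->
            c * exp (nu * INR t) <= chi a alpha t).
  { induction n; intros t H1 H2; [lia|].
    destruct (le_lt_dec t T) as [HtT|HtT].
    - specialize (Hmin t H2 HtT). simpl in Hmin.
      assert (He := exp_pos (nu * INR t)).
      apply (Rmult_le_compat_r (exp (nu * INR t))) in Hmin; [|lra].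
      unfold Rdiv in Hmin. rewrite Rmult_assoc, Rinv_l in Hmin; lra.
    - assert (IH := IHn (t - T)%nat ltac:(lia) ltac:(lia)).
      assert (Hg := chi_ge a alpha t (t - T)%nat ltac:(lia) ltac:(lia)).
      replace (t - (t - T))%nat with T in Hg by lia.
      replace (INR t) with (INR (t - T) + INR T) by (rewrite minus_INR by lia; ring).
      rewrite Rmult_plus_distr_l, exp_plus, HeT.
      assert (0 <= INR T / alpha) by (apply Rlt_le, Rdiv_lt_0_compat; lra).
      apply (Rmult_le_compat_l (INR T / alpha)) in IH; auto.
      nra. }
  destruct (INR_unbounded (2 * alpha)) as [N HN].
  destruct (Hcv (c * exp (- nu) / alpha)) as [t0 Ht0].
  { apply Rdiv_lt_0_compat; [apply Rmult_lt_0_compat; [lra|apply exp_pos]|lra]. }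
  exists (t0 + 2 * N + 2)%nat. intros t Ht.
  destruct (le_lt_dec t (t0 + 1)) as [Hsm|Hbig]; [lia|].
  assert (Hat : a t < INR (t - (t - 1)) / alpha * chi a alpha (t - 1)).
  { replace (t - (t - 1))%nat with 1%nat by lia. simpl INR.
    specialize (Ht0 t ltac:(lia)). unfold R_dist in Ht0. rewrite Rminus_0_r in Ht0.
    assert (Hg := Hgrow (t-1)%nat (t-1)%nat ltac:(lia) ltac:(lia)).
    rewrite minus_INR in Hg by lia. simpl INR in Hg.
    assert (Hx : a t * exp (- nu * INR t) < c * exp (- nu) / alpha).
    { eapply Rle_lt_trans; [apply Rle_abs|]. unfold nu in *. exact Ht0. }
    assert (Hexp : exp (nu * (INR t - 1)) = exp (- nu) * exp (nu * INR t)).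
    { rewrite <- exp_plus. f_equal. ring. }
    assert (Hexp2 : exp (- nu * INR t) * exp (nu * INR t) = 1).
    { rewrite <- exp_plus. replace (- nu * INR t + nu * INR t) with 0 by ring. apply exp_0. }
    assert (He := exp_pos (nu * INR t)).
    apply (Rmult_lt_compat_r (exp (nu * INR t))) in Hx; auto.
    rewrite Rmult_assoc, Hexp2, Rmult_1_r in Hx.
    rewrite Hexp in Hg.
    apply Rlt_le_trans with (1 := Hx).
    apply (Rmult_le_compat_r (/ alpha)) in Hg; [|apply Rlt_le, Rinv_0_lt_compat; lra].
    unfold Rdiv. nra. }
  destruct (chi_att a alpha t ltac:(lia)) as [Hc0|[i [Hi1 [Hit Hci]]]].
  { assert (Hg := chi_ge a alpha t (t-1)%nat ltac:(lia) ltac:(lia)). lra. }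
  assert (HI : (i <= I_t a alpha t)%nat).
  { unfold I_t. apply maxidx_ge; auto.
    destruct (Req_EM_T (chi a alpha t) (chitilde a alpha i t)) as [|Hne]; auto.
    exfalso; apply Hne. unfold chitilde. destruct i; [lia|]. exact Hci. }
  destruct (le_lt_dec (2 * N) (t - i)) as [Hfar|Hnear]; [|lia].
  exfalso.
  assert (HN0 : (1 <= N)%nat).
  { destruct N; [simpl in HN; lra|lia]. }
  set (j := (i + N)%nat).
  assert (Hj := chi_ge a alpha j i ltac:(lia) ltac:(unfold j; lia)).
  assert (Htj := chi_ge a alpha t j ltac:(unfold j; lia) ltac:(unfold j; lia)).
  replace (j - i)%nat with N in Hj by (unfold j; lia).
  assert (Hk : INR (t - j) = INR (t - i) - INR N).
  { unfold j. rewrite !minus_INR by lia. rewrite plus_INR. ring. }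
  rewrite Hk in Htj.
  assert (Hfar' : 2 * INR N <= INR (t - i)).
  { replace 2 with (INR 2) by (simpl; ring). rewrite <- mult_INR. apply le_INR; auto. }
  set (k := INR (t - i)) in *. set (n := INR N) in *.
  set (x := chi a alpha i) in *. set (y := chi a alpha j) in *. set (z := chi a alpha t) in *.
  assert (Hx : 0 < x) by (apply Hpos; auto).
  assert (Hkn : 0 <= (k - n) / alpha).
  { apply Rmult_le_pos; [lra|apply Rlt_le, Rinv_0_lt_compat; lra]. }
  assert (H1 : (k - n) / alpha * (n / alpha * x) <= z).
  { eapply Rle_trans; [|exact Htj]. apply Rmult_le_compat_l; auto. }
  assert (H2 : k / alpha * x < (k - n) / alpha * (n / alpha * x)).
  { replace ((k - n) / alpha * (n / alpha * x)) with ((k - n) * n / alpha * (x / alpha))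
      by (field; lra).
    replace (k / alpha * x) with (k * alpha / alpha * (x / alpha)) by (field; lra).
    assert (0 < x / alpha) by (apply Rdiv_lt_0_compat; lra).
    apply Rmult_lt_compat_r; auto. apply Rmult_lt_compat_r; [apply Rinv_0_lt_compat; lra|].
    nra. }
  lra.
Qed.
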